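(* Let $T>0$, let $\pi:[0,T]\to\mathbb R$ be continuous and piecewise $C^1$ with $\pi(0)=0$, and let $\eta(t)=(t,\pi(t))$. Then there exists $n\in\mathbb N$ such that $\mathcal P_{\alpha_n}\cdots\mathcal P_{\alpha_1}\mathcal P_{\alpha_0}\eta(t)\in\bar C_{\mathrm{aff}}$ for all $t\in[0,T]$.
   Context: $\alpha_0=(0,-2)$, $\alpha_1=(0,2)$, $\tilde\alpha_0(t,x)=t-x$, $\tilde\alpha_1(t,x)=x$; for $k\in\mathbb N$ indices are taken modulo 2. For continuous $\eta:[0,T]\to\mathbb R^2$ with $\eta(0)=0$, $\mathcal P_{\alpha_i}\eta(t)=\eta(t)-\inf_{0\le s\le t}\tilde\alpha_i(\eta(s))\alpha_i$. $\bar C_{\mathrm{aff}}=\{(t,x)\in\mathbb R^2:0\le x\le t\}$. *)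

(* Defs.v *)
From Stdlib Require Import Reals Lra ClassicalEpsilon.
Open Scope R_scope.

(* A path in R^2 (only its values on [0,T] matter). *)
Definition path := R -> R * R.

Definition alpha (k : nat) : R * R :=
  if Nat.even k then (0, -2) else (0, 2).

Definition alpha_t (k : nat) (p : R * R) : R :=
  if Nat.even k then fst p - snd p else snd p.

Definition is_inf_upto (g : R -> R) (t m : R) : Prop :=
  (forall s, 0 <= s <= t -> m <= g s) /\
  (forall m', (forall s, 0 <= s <= t -> m' <= g s) -> m' <= m).

(* inf_{0 <= s <= t} g s (chosen classically; exists whenever g is continuous). *)
Definition inf_upto (g : R -> R) (t : R) : R :=
  epsilon (inhabits 0) (fun m => is_inf_upto g t m).

Definition P_alpha (k : nat) (eta : path) : path :=
  fun t =>
    let m := inf_upto (fun s => alpha_t k (eta s)) t in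
    (fst (eta t) - m * fst (alpha k), snd (eta t) - m * snd (alpha k)).

(* iterP n eta = P_{alpha_n} ... P_{alpha_1} P_{alpha_0} eta *)
Fixpoint iterP (n : nat) (eta : path) : path :=
  match n with
  | O => P_alpha 0 eta
  | S n' => P_alpha (S n') (iterP n' eta)
  end.

Definition C_aff (p : R * R) : Prop := 0 <= snd p <= fst p.

Definition continuous_on_Icc (f : R -> R) (a b : R) : Prop :=
  forall x, a <= x <= b ->
    forall eps, eps > 0 -> exists delta, delta > 0 /\
      forall y, a <= y <= b -> Rabs (y - x) < delta -> Rabs (f y - f x) < eps.

(* f is C^1 on [a,b]: differentiable on (a,b) with derivative extending to a
   continuous function on [a,b] (equivalently, on R). *)
Definition C1_on_Icc (f : R -> R) (a b : R) : Prop :=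
  exists g : R -> R, continuity g /\
    forall x, a < x < b -> derivable_pt_lim f x (g x).

Definition piecewise_C1 (f : R -> R) (a b : R) : Prop :=
  exists (k : nat) (p : nat -> R),
    p 0%nat = a /\ p k = b /\
    (forall i, (i < k)%nat -> p i < p (S i)) /\
    (forall i, (i < k)%nat -> C1_on_Icc f (p i) (p (S i))).

(* Main.v *)
Require Import Defs.
From Stdlib Require Import Reals Lra ClassicalEpsilon FunctionalExtensionality Arith ZArith Lia.
Open Scope R_scope.

Lemma inf_exists (g : R -> R) (t lb : R) :
  0 <= t -> (forall s, 0 <= s <= t -> lb <= g s) -> exists m, is_inf_upto g t m.
Proof.
  intros Ht Hlb.
  set (E := fun r => exists s, 0 <= s <= t /\ r = - g s).
  assert (HB : bound E).
  { exists (- lb). intros r [s [Hs ->]]. specialize (Hlb s Hs). lra. }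
  assert (HE : exists x, E x).
  { exists (- g 0). exists 0. split; [lra|reflexivity]. }
  destruct (completeness E HB HE) as [M [HM1 HM2]].
  exists (- M). split.
  - intros s Hs. assert (E (- g s)) by (exists s; split; auto). specialize (HM1 _ H). lra.
  - intros m' Hm'. assert (M <= - m'); [|lra].
    apply HM2. intros r [s [Hs ->]]. specialize (Hm' s Hs). lra.
Qed.

Lemma inf_spec (g : R -> R) (t lb : R) :
  0 <= t -> (forall s, 0 <= s <= t -> lb <= g s) -> is_inf_upto g t (inf_upto g t).
Proof.
  intros Ht Hlb. unfold inf_upto. apply epsilon_spec. eapply inf_exists; eauto.
Qed.

Definition slope_ok (y : R -> R) (T a b : R) : Prop :=
  forall s t, 0 <= s -> s <= t -> t <= T -> -a*(t-s) <= y t - y s <= b*(t-s).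

Lemma inf_mono (g : R -> R) s t ms mt :
  0 <= s <= t -> is_inf_upto g s ms -> is_inf_upto g t mt -> mt <= ms.
Proof.
  intros Hs [A1 A2] [B1 B2]. apply A2. intros u Hu. apply B1. lra.
Qed.

Lemma pitman (y : R -> R) (T a b : R) :
  0 <= a <= b -> slope_ok y T a b -> y 0 = 0 ->
  (forall t, 0 <= t <= T -> is_inf_upto y t (inf_upto y t)) /\
  slope_ok (fun t => y t - 2 * inf_upto y t) T a b /\
  (forall t, 0 <= t <= T -> inf_upto y t <= 0 /\ 0 <= y t - 2 * inf_upto y t).
Proof.
  intros Hab Hy H0.
  assert (HI : forall t, 0 <= t <= T -> is_inf_upto y t (inf_upto y t)).
  { intros t Ht. apply (inf_spec _ _ (- a * t)); [lra|].
    intros s Hs. destruct (Hy 0 s) as [H1 H2]; try lra. rewrite H0 in H1.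
    assert (a * s <= a * t) by (apply Rmult_le_compat_l; lra). lra. }
  split; [exact HI|split].
  - intros s t Hs Hst HtT.
    pose proof (HI s ltac:(lra)) as [S1 S2]. pose proof (HI t ltac:(lra)) as [T1 T2].
    pose proof (inf_mono y s t _ _ ltac:(lra) (HI s ltac:(lra)) (HI t ltac:(lra))) as Hmono.
    destruct (Hy s t Hs Hst HtT) as [L1 L2].
    set (ms := inf_upto y s) in *. set (mt := inf_upto y t) in *.
    set (K := (y t - y s + 2*ms - b*(t-s))/2).
    assert (HK : K <= mt).
    { apply T2. intros u Hu. destruct (Rle_dec u s) as [Hus|Hus].
      - specialize (S1 u ltac:(lra)). unfold K. lra.
      - destruct (Hy u t) as [U1 U2]; try lra. destruct (Hy s u) as [V1 V2]; try lra.
        specialize (S1 s ltac:(lra)).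
        assert (a*(u-s) <= b*(u-s)) by (apply Rmult_le_compat_r; lra).
        unfold K. assert (b*(t-s) = b*(t-u) + b*(u-s)) by ring. lra. }
    unfold K in HK. split; lra.
  - intros t Ht. destruct (HI t Ht) as [T1 T2].
    pose proof (T1 0 ltac:(lra)). pose proof (T1 t ltac:(lra)). rewrite H0 in *. lra.
Qed.

Definition Yp (pi : R -> R) (k : nat) : path :=
  match k with O => (fun s => (s, pi s)) | S j => iterP j (fun s => (s, pi s)) end.

Lemma iterP_eq pi k : iterP k (fun s => (s, pi s)) = P_alpha k (Yp pi k).
Proof. destruct k; reflexivity. Qed.

Lemma Yp_S pi k : Yp pi (S k) = P_alpha k (Yp pi k).
Proof. simpl. apply iterP_eq. Qed.

Lemma Yp_fst pi k t : fst (Yp pi k t) = t.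
Proof.
  induction k.
  - reflexivity.
  - rewrite Yp_S. unfold P_alpha, alpha. simpl. rewrite IHk.
    destruct (Nat.even k); simpl; ring.
Qed.

Definition Xp pi k t := snd (Yp pi k t).

Definition gk pi k : R -> R :=
  if Nat.even k then (fun s => s - Xp pi k s) else Xp pi k.

Lemma Xp_S pi k t :
  Xp pi (S k) t =
  if Nat.even k then t - (gk pi k t - 2 * inf_upto (gk pi k) t)
  else gk pi k t - 2 * inf_upto (gk pi k) t.
Proof.
  unfold Xp at 1. rewrite Yp_S. unfold P_alpha. simpl.
  replace (fun s => alpha_t k (Yp pi k s)) with (gk pi k).
  2:{ apply functional_extensionality. intro s. unfold gk, alpha_t, Xp.
      rewrite Yp_fst. destruct (Nat.even k); reflexivity. }
  unfold gk, alpha, Xp. destruct (Nat.even k); simpl; ring.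
Qed.

Lemma Xp_0 pi t : Xp pi 0 t = pi t.
Proof. reflexivity. Qed.

Lemma step_inv pi T L k :
  0 <= T -> 1 <= L -> slope_ok (Xp pi k) T L L -> Xp pi k 0 = 0 ->
  (forall t, 0 <= t <= T -> is_inf_upto (gk pi k) t (inf_upto (gk pi k) t)) /\
  (forall t, 0 <= t <= T -> inf_upto (gk pi k) t <= 0 /\
                            0 <= gk pi k t - 2 * inf_upto (gk pi k) t) /\
  slope_ok (Xp pi (S k)) T L L /\ Xp pi (S k) 0 = 0.
Proof.
  intros HT HL Hs H0.
  destruct (Nat.even k) eqn:Ek.
  - assert (Hg : gk pi k = fun s => s - Xp pi k s) by (unfold gk; rewrite Ek; reflexivity).
    assert (Hsg : slope_ok (gk pi k) T (L-1) (L+1)).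
    { rewrite Hg. intros s t A B C. destruct (Hs s t A B C).
      assert (-(L-1)*(t-s) = -(L*(t-s)) + (t-s)) by ring.
      assert ((L+1)*(t-s) = L*(t-s) + (t-s)) by ring.
      split; lra. }
    assert (Hg0 : gk pi k 0 = 0) by (rewrite Hg; lra).
    destruct (pitman (gk pi k) T (L-1) (L+1) ltac:(lra) Hsg Hg0) as [P1 [P2 P3]].
    split; [exact P1|split; [exact P3|split]].
    + intros s t A B C. rewrite !Xp_S, Ek. destruct (P2 s t A B C).
      assert (-(L-1)*(t-s) = -(L*(t-s)) + (t-s)) by ring.
      assert ((L+1)*(t-s) = L*(t-s) + (t-s)) by ring.
      split; lra.
    + rewrite Xp_S, Ek. destruct (P3 0 ltac:(lra)). rewrite Hg0 in *.
      assert (Hz : inf_upto (gk pi k) 0 = 0).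
      { destruct (P1 0 ltac:(lra)) as [Q1 Q2].
        assert (0 <= inf_upto (gk pi k) 0).
        { apply Q2. intros s0 Hs0. replace s0 with 0 by lra. lra. }
        lra. }
      rewrite Hz. ring.
  - assert (Hg : gk pi k = Xp pi k) by (unfold gk; rewrite Ek; reflexivity).
    assert (Hsg : slope_ok (gk pi k) T L L) by (rewrite Hg; exact Hs).
    assert (Hg0 : gk pi k 0 = 0) by (rewrite Hg; lra).
    destruct (pitman (gk pi k) T L L ltac:(lra) Hsg Hg0) as [P1 [P2 P3]].
    split; [exact P1|split; [exact P3|split]].
    + intros s t A B C. rewrite !Xp_S, Ek. apply (P2 s t A B C).
    + rewrite Xp_S, Ek. destruct (P3 0 ltac:(lra)). rewrite Hg0 in *.
      assert (Hz : inf_upto (gk pi k) 0 = 0).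
      { destruct (P1 0 ltac:(lra)) as [Q1 Q2].
        assert (0 <= inf_upto (gk pi k) 0).
        { apply Q2. intros s0 Hs0. replace s0 with 0 by lra. lra. }
        lra. }
      rewrite Hz. ring.
Qed.

Lemma all_inv pi T L :
  0 <= T -> 1 <= L -> slope_ok pi T L L -> pi 0 = 0 -> forall k,
  slope_ok (Xp pi k) T L L /\ Xp pi k 0 = 0 /\
  (forall t, 0 <= t <= T -> is_inf_upto (gk pi k) t (inf_upto (gk pi k) t)) /\
  (forall t, 0 <= t <= T -> inf_upto (gk pi k) t <= 0 /\
                            0 <= gk pi k t - 2 * inf_upto (gk pi k) t).
Proof.
  intros HT HL Hs H0 k.
  assert (A : slope_ok (Xp pi k) T L L /\ Xp pi k 0 = 0).
  { induction k. { split; assumption. }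
    destruct IHk as [I1 I2]. destruct (step_inv pi T L k HT HL I1 I2) as [_ [_ [B C]]]. auto. }
  destruct A as [A1 A2]. destruct (step_inv pi T L k HT HL A1 A2) as [B1 [B2 _]]. auto.
Qed.
Lemma stab_O (x x1 m : R -> R) sigma :
  (forall t, 0 <= t <= sigma -> 0 <= x t <= t) ->
  (forall t, 0 <= t <= sigma -> is_inf_upto x t (m t)) ->
  (forall t, x1 t = x t - 2 * m t) ->
  forall t, 0 <= t <= sigma -> x1 t = x t.
Proof.
  intros Hc Hi Hx1 t Ht. rewrite Hx1. destruct (Hi t Ht) as [A B].
  assert (0 <= m t) by (apply B; intros s Hs; destruct (Hc s ltac:(lra)); lra).
  assert (m t <= 0) by (specialize (A 0 ltac:(lra)); destruct (Hc 0 ltac:(lra)); lra).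
  replace (m t) with 0 by lra. ring.
Qed.

Lemma stab_E (x x1 m : R -> R) sigma :
  (forall t, 0 <= t <= sigma -> 0 <= x t <= t) ->
  (forall t, 0 <= t <= sigma -> is_inf_upto (fun s => s - x s) t (m t)) ->
  (forall t, x1 t = t - ((t - x t) - 2 * m t)) ->
  forall t, 0 <= t <= sigma -> x1 t = x t.
Proof.
  intros Hc Hi Hx1 t Ht. rewrite Hx1. destruct (Hi t Ht) as [A B].
  assert (0 <= m t) by (apply B; intros s Hs; destruct (Hc s ltac:(lra)); lra).
  assert (m t <= 0) by (specialize (A 0 ltac:(lra)); destruct (Hc 0 ltac:(lra)); lra).
  replace (m t) with 0 by lra. ring.
Qed.

Lemma growth (x x1 x2 m m2 : R -> R) T L sigma :
  1 <= L -> 0 < sigma <= T -> slope_ok x T L L ->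
  (forall t, 0 <= t <= sigma -> 0 <= x t <= t) ->
  (forall t, 0 <= t <= T -> is_inf_upto x t (m t)) ->
  (forall t, x1 t = x t - 2 * m t) ->
  (forall t, 0 <= t <= T -> is_inf_upto (fun s => s - x1 s) t (m2 t)) ->
  (forall t, x2 t = t - ((t - x1 t) - 2 * m2 t)) ->
  forall t, 0 <= t <= Rmin T (sigma + sigma / (7 * L)) -> 0 <= x2 t <= t.
Proof.
  intros HL Hs Hsl Hc Hm Hx1 Hm2 Hx2 t Ht.
  assert (HtT : t <= T) by (pose proof (Rmin_l T (sigma + sigma/(7*L))); lra).
  assert (E1 : forall u, 0 <= u <= sigma -> x1 u = x u).
  { apply (stab_O x x1 m sigma Hc); auto. intros u Hu; apply Hm; lra. }
  assert (C1 : forall u, 0 <= u <= sigma -> 0 <= x1 u <= u).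
  { intros u Hu. rewrite E1; auto. }
  assert (E2 : forall u, 0 <= u <= sigma -> x2 u = x1 u).
  { apply (stab_E x1 x2 m2 sigma C1); auto. intros u Hu; apply Hm2; lra. }
  destruct (Rle_dec t sigma) as [Hts|Hts].
  { rewrite E2, E1 by lra. apply Hc; lra. }
  set (h := t - sigma).
  assert (Hh : 7 * L * h <= sigma).
  { assert (t <= sigma + sigma/(7*L)) by (pose proof (Rmin_r T (sigma + sigma/(7*L))); lra).
    assert (h <= sigma/(7*L)) by (unfold h; lra).
    apply Rmult_le_compat_l with (r := 7*L) in H0; [|lra].
    field_simplify in H0; lra. }
  assert (Hh0 : 0 < h) by (unfold h; lra).
  assert (Mb : forall u, sigma <= u <= t -> - (L*h) <= m u <= 0).
  { intros u Hu. destruct (Hm u ltac:(lra)) as [A B]. split.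
    - apply B. intros s Hs0. destruct (Rle_dec s sigma).
      + destruct (Hc s ltac:(lra)). nra.
      + destruct (Hsl sigma s) as [S1 S2]; try lra. destruct (Hc sigma ltac:(lra)).
        assert (L*(s-sigma) <= L*h) by (apply Rmult_le_compat_l; unfold h; lra). lra.
    - specialize (A 0 ltac:(lra)). destruct (Hc 0 ltac:(lra)). lra. }
  assert (X1b : forall u, sigma <= u <= t -> x u <= x1 u <= x sigma + 3*(L*h)).
  { intros u Hu. rewrite Hx1. destruct (Mb u Hu).
    destruct (Hsl sigma u) as [S1 S2]; try lra.
    assert (L*(u-sigma) <= L*h) by (apply Rmult_le_compat_l; unfold h; lra). lra. }
  assert (X1p : 0 <= x1 t).
  { rewrite Hx1. destruct (Hm t ltac:(lra)) as [A B]. specialize (A t ltac:(lra)).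
    destruct (Mb t ltac:(lra)). lra. }
  destruct (Hm2 t ltac:(lra)) as [A2 B2].
  assert (m2le : m2 t <= 0) by (specialize (A2 0 ltac:(lra)); simpl in A2;
     pose proof (C1 0 ltac:(lra)); lra).
  assert (m2le2 : m2 t <= t - x1 t) by (apply (A2 t); lra).
  rewrite Hx2. split; [|lra].
  destruct (Rle_dec (x sigma + 3*(L*h)) sigma) as [Hc1|Hc1].
  - assert (0 <= m2 t).
    { apply B2. intros s Hs0. destruct (Rle_dec s sigma).
      + destruct (C1 s ltac:(lra)). lra.
      + destruct (X1b s ltac:(lra)). lra. }
    lra.
  - assert (sigma - x sigma - 3*(L*h) <= m2 t).
    { apply B2. intros s Hs0. destruct (Rle_dec s sigma).
      + destruct (C1 s ltac:(lra)). lra.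
      + destruct (X1b s ltac:(lra)). lra. }
    destruct (X1b t ltac:(lra)).
    destruct (Hsl sigma t) as [S1 S2]; try lra. fold h in S1.
    destruct (Hc sigma ltac:(lra)).
    assert (-L*h = -(L*h)) by ring. lra.
Qed.

Lemma even_S_neg k : Nat.even (S k) = negb (Nat.even k).
Proof. rewrite Nat.even_succ, <- Nat.negb_even. reflexivity. Qed.

Definition Qc pi k sigma := forall t, 0 <= t <= sigma -> 0 <= Xp pi k t <= t.

Section Iter.
Variables (pi : R -> R) (T L : R).
Hypotheses (HT : 0 <= T) (HL : 1 <= L) (Hsl : slope_ok pi T L L) (Hp0 : pi 0 = 0).

Lemma Qc_S k sigma : sigma <= T -> Qc pi k sigma -> Qc pi (S k) sigma.
Proof.
  intros HsT HQ. destruct (all_inv pi T L HT HL Hsl Hp0 k) as [_ [_ [I1 _]]].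
  destruct (Nat.even k) eqn:Ek.
  - assert (Hg : gk pi k = fun s => s - Xp pi k s) by (unfold gk; rewrite Ek; reflexivity).
    intros t Ht.
    rewrite (stab_E (Xp pi k) (Xp pi (S k)) (inf_upto (gk pi k)) sigma HQ); auto.
    + intros u Hu. rewrite <- Hg. apply I1. lra.
    + intro u. rewrite Xp_S, Ek, Hg. reflexivity.
  - assert (Hg : gk pi k = Xp pi k) by (unfold gk; rewrite Ek; reflexivity).
    intros t Ht.
    rewrite (stab_O (Xp pi k) (Xp pi (S k)) (inf_upto (gk pi k)) sigma HQ); auto.
    + intros u Hu. rewrite <- Hg. apply I1. lra.
    + intro u. rewrite Xp_S, Ek, Hg. reflexivity.
Qed.

Lemma Qc_grow k sigma : 0 < sigma <= T -> Qc pi k sigma ->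
  exists k', Qc pi k' (Rmin T (sigma + sigma / (7 * L))).
Proof.
  intros Hs HQ.
  assert (Hodd : forall j, Nat.even j = false -> Qc pi j sigma ->
            Qc pi (S (S j)) (Rmin T (sigma + sigma / (7 * L)))).
  { intros j Ej HQj.
    destruct (all_inv pi T L HT HL Hsl Hp0 j) as [S1 [_ [I1 _]]].
    destruct (all_inv pi T L HT HL Hsl Hp0 (S j)) as [_ [_ [I2 _]]].
    assert (Ej1 : Nat.even (S j) = true) by (rewrite even_S_neg, Ej; reflexivity).
    assert (Hg1 : gk pi j = Xp pi j) by (unfold gk; rewrite Ej; reflexivity).
    assert (Hg2 : gk pi (S j) = fun s => s - Xp pi (S j) s)
      by (unfold gk; rewrite Ej1; reflexivity).
    intros t Ht.
    apply (growth (Xp pi j) (Xp pi (S j)) (Xp pi (S (S j)))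
             (inf_upto (gk pi j)) (inf_upto (gk pi (S j))) T L sigma); auto.
    - intros u Hu. rewrite <- Hg1. apply I1. lra.
    - intro u. rewrite Xp_S, Ej, Hg1. reflexivity.
    - intros u Hu. rewrite <- Hg2. apply I2. lra.
    - intro u. rewrite (Xp_S pi (S j)), Ej1, Hg2. reflexivity. }
  destruct (Nat.even k) eqn:Ek.
  - exists (S (S (S k))). apply Hodd.
    + rewrite even_S_neg, Ek. reflexivity.
    + apply Qc_S; [lra|exact HQ].
  - exists (S (S k)). apply Hodd; auto.
Qed.

Lemma pow_bern (c : R) (n : nat) : 0 <= c -> 1 + INR n * c <= (1 + c) ^ n.
Proof.
  intro Hc. induction n.
  - simpl. lra.
  - rewrite S_INR. simpl.
    assert (1 <= (1+c)^n) by (apply pow_R1_Rle; lra).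
    assert (0 <= INR n) by apply pos_INR. nra.
Qed.

Lemma Qc_all k0 sigma0 : 0 < sigma0 <= T -> Qc pi k0 sigma0 -> exists k, Qc pi k T.
Proof.
  intros Hs HQ.
  set (c := 1 / (7 * L)).
  assert (Hc : 0 < c) by (unfold c; apply Rdiv_lt_0_compat; lra).
  assert (Hn : forall n, exists k, Qc pi k (Rmin T (sigma0 * (1 + c) ^ n))).
  { induction n.
    - exists k0. simpl. rewrite Rmult_1_r, Rmin_right by lra. exact HQ.
    - destruct IHn as [k Hk].
      destruct (Rle_dec T (sigma0 * (1 + c) ^ n)) as [Hle|Hlt].
      + exists k. rewrite Rmin_left in Hk by lra. rewrite Rmin_left; [exact Hk|].
        simpl. assert (1 <= 1 + c) by lra.
        assert (0 <= sigma0 * (1+c)^n) by lra. nra.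
      + rewrite Rmin_right in Hk by lra.
        assert (0 < sigma0 * (1 + c) ^ n) by (apply Rmult_lt_0_compat; [lra|apply pow_lt; lra]).
        destruct (Qc_grow k (sigma0 * (1 + c) ^ n) ltac:(lra) Hk) as [k' Hk'].
        exists k'. simpl.
        replace (sigma0 * ((1 + c) * (1 + c) ^ n)) with
           (sigma0 * (1 + c) ^ n + sigma0 * (1 + c) ^ n / (7 * L)); [exact Hk'|].
        unfold c. field. lra. }
  destruct (archimed (T / (sigma0 * c))) as [Ha _].
  assert (Hz : (0 <= up (T / (sigma0 * c)))%Z).
  { apply le_IZR. assert (0 <= T / (sigma0*c)).
    { apply Rmult_le_pos; [lra|]. apply Rlt_le, Rinv_0_lt_compat, Rmult_lt_0_compat; lra. }
    lra. }
  set (n := Z.to_nat (up (T / (sigma0 * c)))).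
  assert (HnR : T / (sigma0 * c) <= INR n).
  { unfold n. rewrite INR_IZR_INZ, Z2Nat.id by exact Hz. lra. }
  destruct (Hn n) as [k Hk]. exists k.
  rewrite Rmin_left in Hk; [exact Hk|].
  pose proof (pow_bern c n (Rlt_le _ _ Hc)).
  assert (T <= INR n * (sigma0 * c)).
  { apply Rmult_le_compat_r with (r := sigma0 * c) in HnR; [|nra].
    unfold Rdiv in HnR. rewrite Rmult_assoc, Rinv_l in HnR by nra. lra. }
  nra.
Qed.

End Iter.

Lemma Rabs_le_inv a b : Rabs a <= b -> - b <= a <= b.
Proof. unfold Rabs. destruct (Rcase_abs a); intros; lra. Qed.

Lemma approx_pit (y m : R -> R) (u e d : R) :
  0 <= e ->
  (forall t, 0 <= t <= d -> is_inf_upto y t (m t)) ->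
  (forall s, 0 <= s <= d -> Rabs (y s - u * s) <= e * s) ->
  forall t, 0 <= t <= d -> Rabs (y t - 2 * m t - Rabs u * t) <= 3 * e * t.
Proof.
  intros He Hi Hy t Ht. destruct (Hi t Ht) as [A B].
  pose proof (Hy t Ht) as Yt. apply Rabs_le_inv in Yt.
  destruct (Rle_dec 0 u) as [Hu|Hu].
  - rewrite (Rabs_right u) by lra.
    assert (- (e*t) <= m t).
    { apply B. intros s Hs. pose proof (Hy s ltac:(lra)) as Ys. apply Rabs_le_inv in Ys.
      assert (e*s <= e*t) by (apply Rmult_le_compat_l; lra).
      assert (0 <= u*s) by (apply Rmult_le_pos; lra). lra. }
    assert (m t <= 0).
    { specialize (A 0 ltac:(lra)). pose proof (Hy 0 ltac:(lra)) as Y0.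
      rewrite Rmult_0_r, Rminus_0_r in Y0. apply Rabs_le_inv in Y0. lra. }
    apply Rabs_le. split; nra.
  - rewrite (Rabs_left u) by lra.
    assert ((u - e) * t <= m t).
    { apply B. intros s Hs. pose proof (Hy s ltac:(lra)) as Ys. apply Rabs_le_inv in Ys.
      assert ((u-e)*t <= (u-e)*s) by (apply Rmult_le_compat_neg_l; lra). nra. }
    assert (m t <= y t) by (apply A; lra).
    apply Rabs_le. split; nra.
Qed.

Fixpoint W (v : R) (k : nat) : R :=
  match k with
  | O => v
  | S j => if Nat.even j then 1 - Rabs (1 - W v j) else Rabs (W v j)
  end.

Lemma W_S_ev v j : Nat.even j = true -> W v (S j) = 1 - Rabs (1 - W v j).
Proof. intro E. simpl. rewrite E. reflexivity. Qed.
Lemma W_S_od v j : Nat.even j = false -> W v (S j) = Rabs (W v j).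
Proof. intro E. simpl. rewrite E. reflexivity. Qed.

Lemma ev2 i : Nat.even (2 * i) = true.
Proof.
  induction i. reflexivity.
  replace (2 * S i)%nat with (S (S (2 * i))) by lia. simpl. exact IHi.
Qed.

Definition goodj v j :=
  (Nat.even j = false /\ 0 < W v j) \/ (Nat.even j = true /\ j <> O /\ W v j < 1).

Lemma good_exists v : exists j, goodj v j.
Proof.
  assert (Hle : forall i, W v (S (2 * i)) <= 1).
  { intro i. rewrite W_S_ev by apply ev2. pose proof (Rabs_pos (1 - W v (2*i))). lra. }
  assert (Hind : forall n i, - 2 * INR n < W v (S (2 * i)) -> exists j, goodj v j).
  { induction n; intros i Hi.
    - exists (S (2*i)). left. split; [rewrite even_S_neg, ev2; reflexivity|].
      change (INR 0) with 0 in Hi. lra.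
    - destruct (Rlt_dec 0 (W v (S (2 * i)))) as [Hp|Hp].
      { exists (S (2*i)). left. split; [rewrite even_S_neg, ev2; reflexivity|lra]. }
      assert (E1 : W v (S (S (2 * i))) = - W v (S (2 * i))).
      { rewrite W_S_od by (rewrite even_S_neg, ev2; reflexivity).
        rewrite Rabs_left1 by lra. reflexivity. }
      destruct (Rlt_dec (W v (S (S (2 * i)))) 1) as [H1|H1].
      { exists (S (S (2*i))). right. split; [simpl; apply ev2|split; [lia|lra]]. }
      apply (IHn (S i)).
      replace (S (2 * S i)) with (S (S (S (2 * i)))) by lia.
      rewrite W_S_ev by (simpl; apply ev2).
      rewrite E1. rewrite Rabs_left1 by lra.
      rewrite S_INR in Hi. lra. }
  destruct (archimed (- W v 1)) as [Ha _].
  set (n := Z.to_nat (up (- W v 1))).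
  assert (Hn : - W v 1 < 2 * INR n + 1).
  { unfold n. destruct (Z_le_gt_dec 0 (up (- W v 1))) as [Hz|Hz].
    - rewrite INR_IZR_INZ, Z2Nat.id by exact Hz. pose proof (IZR_le _ _ Hz). lra.
    - pose proof (pos_INR (Z.to_nat (up (- W v 1)))). apply Z.gt_lt in Hz. apply IZR_lt in Hz. lra. }
  apply (Hind (S n) 0%nat). rewrite S_INR. change (S (2*0)) with 1%nat. lra.
Qed.

Lemma base pi T L v :
  0 < T -> 1 <= L -> slope_ok pi T L L -> pi 0 = 0 ->
  (forall eps, 0 < eps -> exists delta, 0 < delta /\
     forall t, 0 <= t <= delta -> Rabs (pi t - v * t) <= eps * t) ->
  exists k sigma, 0 < sigma <= T /\ Qc pi k sigma.
Proof.
  intros HT HL Hsl Hp0 Has.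
  destruct (good_exists v) as [j Hj].
  set (e0 := if Nat.even j then 1 - W v j else W v j).
  assert (He0 : 0 < e0) by (unfold e0; destruct Hj as [[E1 E2]|[E1 [E2 E3]]]; rewrite E1; lra).
  assert (H3 : 0 < 3 ^ j) by (apply pow_lt; lra).
  set (eps := e0 / 3 ^ j).
  assert (Heps : 0 < eps) by (unfold eps; apply Rdiv_lt_0_compat; lra).
  destruct (Has eps Heps) as [delta [Hd Hdel]].
  set (d := Rmin delta T).
  assert (Hd1 : d <= delta) by apply Rmin_l.
  assert (Hd2 : d <= T) by apply Rmin_r.
  assert (Hd0 : 0 < d) by (unfold d; apply Rmin_glb_lt; lra).
  assert (Happ : forall k t, 0 <= t <= d -> Rabs (Xp pi k t - W v k * t) <= 3 ^ k * eps * t).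
  { induction k; intros t Ht.
    - rewrite Xp_0. simpl. rewrite Rmult_1_l. apply Hdel. lra.
    - destruct (all_inv pi T L ltac:(lra) HL Hsl Hp0 k) as [_ [_ [I1 _]]].
      assert (Hi : forall u, 0 <= u <= d -> is_inf_upto (gk pi k) u (inf_upto (gk pi k) u))
        by (intros u Hu; apply I1; lra).
      assert (He : 0 <= 3 ^ k * eps) by (apply Rmult_le_pos; [apply pow_le|]; lra).
      destruct (Nat.even k) eqn:Ek.
      + assert (Hg : gk pi k = fun s => s - Xp pi k s) by (unfold gk; rewrite Ek; reflexivity).
        assert (Hy : forall s, 0 <= s <= d -> Rabs (gk pi k s - (1 - W v k) * s) <= 3 ^ k * eps * s).
        { intros s Hs. rewrite Hg. replace (s - Xp pi k s - (1 - W v k) * s)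
            with (- (Xp pi k s - W v k * s)) by ring. rewrite Rabs_Ropp. apply IHk; lra. }
        pose proof (approx_pit (gk pi k) (inf_upto (gk pi k)) (1 - W v k) _ d He Hi Hy t Ht) as A.
        rewrite Xp_S, Ek, W_S_ev by exact Ek.
        replace (t - (gk pi k t - 2 * inf_upto (gk pi k) t) - (1 - Rabs (1 - W v k)) * t)
          with (- (gk pi k t - 2 * inf_upto (gk pi k) t - Rabs (1 - W v k) * t)) by ring.
        rewrite Rabs_Ropp. simpl pow. lra.
      + assert (Hg : gk pi k = Xp pi k) by (unfold gk; rewrite Ek; reflexivity).
        assert (Hy : forall s, 0 <= s <= d -> Rabs (gk pi k s - W v k * s) <= 3 ^ k * eps * s).
        { intros s Hs. rewrite Hg. apply IHk; lra. }
        pose proof (approx_pit (gk pi k) (inf_upto (gk pi k)) (W v k) _ d He Hi Hy t Ht) as A.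
        rewrite Xp_S, Ek, W_S_od by exact Ek. simpl pow. lra. }
  assert (Hke : 3 ^ j * eps = e0) by (unfold eps; field; lra).
  exists j, d. split; [lra|]. intros t Ht.
  pose proof (Happ j t Ht) as A. apply Rabs_le_inv in A. rewrite Hke in A.
  destruct j as [|j'].
  { destruct Hj as [[E1 _]|[_ [E2 _]]]; [discriminate|congruence]. }
  destruct (all_inv pi T L ltac:(lra) HL Hsl Hp0 j') as [_ [_ [_ I2]]].
  destruct (I2 t ltac:(lra)) as [_ B].
  rewrite Xp_S. rewrite Xp_S in A.
  destruct (Nat.even j') eqn:Ej'.
  - assert (E1 : Nat.even (S j') = false) by (rewrite even_S_neg, Ej'; reflexivity).
    destruct Hj as [[_ Hw]|[E2 _]]; [|congruence].
    unfold e0 in A. rewrite E1 in A. nra.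
  - assert (E1 : Nat.even (S j') = true) by (rewrite even_S_neg, Ej'; reflexivity).
    destruct Hj as [[E2 _]|[_ [_ Hw]]]; [congruence|].
    unfold e0 in A. rewrite E1 in A. nra.
Qed.

Lemma cont_eps f x0 : continuity_pt f x0 ->
  forall eps, 0 < eps -> exists delta, 0 < delta /\
    forall x, Rabs (x - x0) < delta -> Rabs (f x - f x0) < eps.
Proof.
  intros H eps He. destruct (H eps He) as [alp [Ha Hf]]. exists alp. split; [lra|].
  intros x Hx. destruct (Req_dec x x0) as [->|Hne].
  - unfold Rminus. rewrite Rplus_opp_r, Rabs_R0. lra.
  - apply (Hf x). split; [split; [exact I|auto]|exact Hx].
Qed.

Lemma extend (F : R -> R) a b K :
  0 <= K ->
  (forall x, a <= x <= b -> forall eps, eps > 0 -> exists delta, delta > 0 /\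
     forall y, a <= y <= b -> Rabs (y - x) < delta -> Rabs (F y - F x) < eps) ->
  (forall s t, a < s -> s < t -> t < b -> Rabs (F t - F s) <= K * (t - s)) ->
  forall s t, a <= s -> s <= t -> t <= b -> Rabs (F t - F s) <= K * (t - s).
Proof.
  intros HK Hc Hi s t H1 H2 H3.
  destruct (Req_dec s t) as [->|Hne].
  { unfold Rminus. rewrite !Rplus_opp_r, Rabs_R0. lra. }
  assert (Heps : forall eps, 0 < eps -> Rabs (F t - F s) <= K * (t - s) + 2 * eps).
  { intros eps He.
    destruct (Hc s ltac:(lra) eps He) as [ds [Hds Hs]].
    destruct (Hc t ltac:(lra) eps He) as [dt [Hdt Ht]].
    set (eta := Rmin (Rmin ds dt) ((t - s) / 2) / 2).
    assert (Heta0 : 0 < eta).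
    { unfold eta. apply Rdiv_lt_0_compat; [|lra]. repeat apply Rmin_glb_lt; lra. }
    assert (Heta1 : eta < ds).
    { unfold eta. pose proof (Rmin_l (Rmin ds dt) ((t-s)/2)). pose proof (Rmin_l ds dt). lra. }
    assert (Heta2 : eta < dt).
    { unfold eta. pose proof (Rmin_l (Rmin ds dt) ((t-s)/2)). pose proof (Rmin_r ds dt). lra. }
    assert (Heta3 : eta <= (t - s) / 4).
    { unfold eta. pose proof (Rmin_r (Rmin ds dt) ((t-s)/2)). lra. }
    pose proof (Hs (s + eta) ltac:(lra) ltac:(rewrite Rabs_right; lra)) as A1.
    pose proof (Ht (t - eta) ltac:(lra) ltac:(rewrite Rabs_left; lra)) as A2.
    pose proof (Hi (s + eta) (t - eta) ltac:(lra) ltac:(lra) ltac:(lra)) as A3.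
    assert (K * (t - eta - (s + eta)) <= K * (t - s)) by (apply Rmult_le_compat_l; lra).
    apply Rlt_le, Rabs_le_inv in A1. apply Rlt_le, Rabs_le_inv in A2. apply Rabs_le_inv in A3.
    apply Rabs_le. lra. }
  destruct (Rle_dec (Rabs (F t - F s)) (K * (t - s))) as [Hle|Hgt]; [exact Hle|].
  specialize (Heps ((Rabs (F t - F s) - K * (t - s)) / 4) ltac:(lra)). lra.
Qed.

Lemma cont_sub (f : R -> R) a b v :
  (forall x, a <= x <= b -> forall eps, eps > 0 -> exists delta, delta > 0 /\
     forall y, a <= y <= b -> Rabs (y - x) < delta -> Rabs (f y - f x) < eps) ->
  (forall x, a <= x <= b -> forall eps, eps > 0 -> exists delta, delta > 0 /\
     forall y, a <= y <= b -> Rabs (y - x) < delta ->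
       Rabs ((f y - v * y) - (f x - v * x)) < eps).
Proof.
  intros Hc x Hx eps He.
  destruct (Hc x Hx (eps / 2) ltac:(lra)) as [d [Hd Hf]].
  exists (Rmin d (eps / (2 * (Rabs v + 1)))). split.
  { apply Rmin_glb_lt; [lra|]. apply Rdiv_lt_0_compat; [lra|]. pose proof (Rabs_pos v); lra. }
  intros y Hy Hyx.
  pose proof (Rmin_l d (eps / (2 * (Rabs v + 1)))).
  pose proof (Rmin_r d (eps / (2 * (Rabs v + 1)))).
  pose proof (Hf y Hy ltac:(lra)).
  replace (f y - v * y - (f x - v * x)) with ((f y - f x) + (- (v * (y - x)))) by ring.
  eapply Rle_lt_trans; [apply Rabs_triang|]. rewrite Rabs_Ropp, Rabs_mult.
  assert (Rabs v * Rabs (y - x) <= (Rabs v + 1) * (eps / (2 * (Rabs v + 1)))).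
  { apply Rmult_le_compat; try apply Rabs_pos; lra. }
  replace ((Rabs v + 1) * (eps / (2 * (Rabs v + 1)))) with (eps / 2) in H2
    by (field; pose proof (Rabs_pos v); lra).
  lra.
Qed.

Lemma cont_restrict (f : R -> R) a b c d :
  c <= a -> b <= d ->
  (forall x, c <= x <= d -> forall eps, eps > 0 -> exists delta, delta > 0 /\
     forall y, c <= y <= d -> Rabs (y - x) < delta -> Rabs (f y - f x) < eps) ->
  (forall x, a <= x <= b -> forall eps, eps > 0 -> exists delta, delta > 0 /\
     forall y, a <= y <= b -> Rabs (y - x) < delta -> Rabs (f y - f x) < eps).
Proof.
  intros H1 H2 Hc x Hx eps He. destruct (Hc x ltac:(lra) eps He) as [dl [Hd Hf]].
  exists dl. split; auto. intros y Hy. apply Hf. lra.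
Qed.

Lemma piece_lip (f g : R -> R) a b :
  a < b -> continuity g ->
  (forall x, a < x < b -> derivable_pt_lim f x (g x)) ->
  (forall x, a <= x <= b -> forall eps, eps > 0 -> exists delta, delta > 0 /\
     forall y, a <= y <= b -> Rabs (y - x) < delta -> Rabs (f y - f x) < eps) ->
  exists M, 0 <= M /\ forall s t, a <= s -> s <= t -> t <= b -> Rabs (f t - f s) <= M * (t - s).
Proof.
  intros Hab Hg Hd Hc.
  destruct (continuity_ab_maj g a b ltac:(lra) (fun c _ => Hg c)) as [x1 [Hx1 _]].
  destruct (continuity_ab_min g a b ltac:(lra) (fun c _ => Hg c)) as [x2 [Hx2 _]].
  set (M := Rmax (Rabs (g x1)) (Rabs (g x2))).
  assert (HM : forall c, a <= c <= b -> Rabs (g c) <= M).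
  { intros c Hc'. specialize (Hx1 c Hc'). specialize (Hx2 c Hc'). unfold M.
    pose proof (Rmax_l (Rabs (g x1)) (Rabs (g x2))). pose proof (Rmax_r (Rabs (g x1)) (Rabs (g x2))).
    pose proof (Rabs_le_inv _ _ (Rle_refl (Rabs (g x1)))).
    pose proof (Rabs_le_inv _ _ (Rle_refl (Rabs (g x2)))).
    apply Rabs_le. lra. }
  assert (HM0 : 0 <= M) by (pose proof (HM a ltac:(lra)); pose proof (Rabs_pos (g a)); lra).
  exists M. split; auto. apply extend; auto.
  intros s t H1 H2 H3.
  destruct (MVT_cor2 f g s t H2 (fun c Hc' => Hd c ltac:(lra))) as [c [Hc1 Hc2]].
  rewrite Hc1, Rabs_mult, (Rabs_right (t - s)) by lra.
  apply Rmult_le_compat_r; [lra|]. apply HM. lra.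
Qed.

Lemma finite_bound (P : nat -> R -> Prop) n :
  (forall i M M', M <= M' -> P i M -> P i M') ->
  (forall i, (i < n)%nat -> exists M, P i M) ->
  exists M, 1 <= M /\ forall i, (i < n)%nat -> P i M.
Proof.
  intros Hm. induction n; intros H.
  - exists 1. split; [lra|]. intros i Hi. lia.
  - destruct IHn as [M [HM1 HM2]]. { intros i Hi. apply H. lia. }
    destruct (H n ltac:(lia)) as [M' HM'].
    exists (Rmax M M'). split. { pose proof (Rmax_l M M'). lra. }
    intros i Hi. destruct (Nat.eq_dec i n) as [->|Hne].
    + apply (Hm n M'); [apply Rmax_r|exact HM'].
    + apply (Hm i M); [apply Rmax_l|]. apply HM2. lia.
Qed.

Theorem proposition5p4 (T : R) (pi : R -> R) :
  0 < T ->
  continuous_on_Icc pi 0 T ->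
  piecewise_C1 pi 0 T ->
  pi 0 = 0 ->
  exists n : nat, forall t, 0 <= t <= T ->
    C_aff (iterP n (fun s => (s, pi s)) t).
Proof.
  intros HT Hc [k [p [Hp0 [Hpk [Hinc HC1]]]]] Hpi0.
  assert (Hmono : forall i j, (i <= j)%nat -> (j <= k)%nat -> p i <= p j).
  { intros i j Hij. induction Hij; intros Hjk; [lra|].
    specialize (IHHij ltac:(lia)). specialize (Hinc m ltac:(lia)). lra. }
  assert (Hpr : forall i, (i <= k)%nat -> 0 <= p i <= T).
  { intros i Hi. rewrite <- Hp0, <- Hpk. split; apply Hmono; lia. }
  assert (Hk : (0 < k)%nat).
  { destruct k; [|lia]. rewrite Hpk in Hp0. lra. }
  destruct (finite_bound (fun i M => 0 <= M /\ forall s t, p i <= s -> s <= t -> t <= p (S i) ->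
                 Rabs (pi t - pi s) <= M * (t - s)) k) as [L [HL1 HL2]].
  { intros i M M' HMM [H0 H1]. split; [lra|]. intros s t A B C.
    specialize (H1 s t A B C). assert (M * (t - s) <= M' * (t - s)) by (apply Rmult_le_compat_r; lra).
    lra. }
  { intros i Hi. destruct (HC1 i Hi) as [g [Hg Hd]].
    destruct (piece_lip pi g (p i) (p (S i)) (Hinc i Hi) Hg Hd) as [M [HM0 HM]].
    { apply (cont_restrict pi _ _ 0 T); try apply Hpr; try lia. exact Hc. }
    exists M. split; auto. }
  assert (Hchain : forall j, (j <= k)%nat -> forall s t, 0 <= s -> s <= t -> t <= p j ->
                     Rabs (pi t - pi s) <= L * (t - s)).
  { induction j; intros Hj s t A B C.
    - rewrite Hp0 in C. replace s with 0 by lra. replace t with 0 by lra.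
      unfold Rminus. rewrite !Rplus_opp_r, Rabs_R0. lra.
    - specialize (IHj ltac:(lia)). destruct (HL2 j ltac:(lia)) as [_ Hpc].
      destruct (Rle_dec t (p j)) as [Htj|Htj]; [apply IHj; lra|].
      destruct (Rle_dec (p j) s) as [Hsj|Hsj]; [apply Hpc; lra|].
      pose proof (IHj s (p j) A ltac:(lra) ltac:(lra)).
      pose proof (Hpc (p j) t ltac:(lra) ltac:(lra) C).
      replace (pi t - pi s) with ((pi t - pi (p j)) + (pi (p j) - pi s)) by ring.
      eapply Rle_trans; [apply Rabs_triang|]. lra. }
  assert (Hsl : slope_ok pi T L L).
  { intros s t A B C. rewrite <- Hpk in C. pose proof (Hchain k (le_n k) s t A B C) as H.
    apply Rabs_le_inv in H. lra. }
  destruct (HC1 0%nat Hk) as [g [Hg Hd]].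
  assert (Has : forall eps, 0 < eps -> exists delta, 0 < delta /\
            forall t, 0 <= t <= delta -> Rabs (pi t - g 0 * t) <= eps * t).
  { intros eps He. destruct (cont_eps g 0 (Hg 0) eps He) as [dg [Hdg Hgc]].
    assert (Hp1 : 0 < p 1%nat) by (pose proof (Hinc 0%nat Hk); lra).
    assert (Hp1T : p 1%nat <= T) by (apply Hpr; lia).
    set (d := Rmin dg (p 1%nat)).
    assert (Hd0 : 0 < d) by (unfold d; apply Rmin_glb_lt; lra).
    assert (Hd1 : d <= dg) by apply Rmin_l. assert (Hd2 : d <= p 1%nat) by apply Rmin_r.
    exists d. split; auto. intros t Ht.
    pose proof (extend (fun x => pi x - g 0 * x) 0 d eps ltac:(lra)) as E.
    assert (Hcont : forall x, 0 <= x <= d -> forall e, e > 0 -> exists delta, delta > 0 /\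
       forall y, 0 <= y <= d -> Rabs (y - x) < delta ->
       Rabs ((pi y - g 0 * y) - (pi x - g 0 * x)) < e).
    { apply cont_sub. apply (cont_restrict pi _ _ 0 T); try lra. exact Hc. }
    specialize (E Hcont). simpl in E.
    assert (E2 : Rabs (pi t - g 0 * t - (pi 0 - g 0 * 0)) <= eps * (t - 0)).
    { apply E; try lra. intros s u A B C.
      rewrite Hp0 in Hd.
      destruct (MVT_cor2 pi g s u B (fun c Hc' => Hd c ltac:(lra))) as [c [Hc1 Hc2]].
      replace (pi u - g 0 * u - (pi s - g 0 * s)) with ((g c - g 0) * (u - s))
        by (rewrite <- (Rplus_0_r (pi u)), <- (Rplus_opp_r (pi s)); lra).
      rewrite Rabs_mult, (Rabs_right (u - s)) by lra.
      apply Rmult_le_compat_r; [lra|]. apply Rlt_le, Hgc. rewrite Rminus_0_r, Rabs_right; lra. }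
    rewrite Hpi0 in E2. replace (pi t - g 0 * t - (0 - g 0 * 0)) with (pi t - g 0 * t) in E2 by ring.
    lra. }
  destruct (base pi T L (g 0) HT HL1 Hsl Hpi0 Has) as [k0 [s0 [Hs0 HQ0]]].
  destruct (Qc_all pi T L ltac:(lra) HL1 Hsl Hpi0 k0 s0 Hs0 HQ0) as [j Hj].
  pose proof (Qc_S pi T L ltac:(lra) HL1 Hsl Hpi0 j T ltac:(lra) Hj) as HS.
  exists j. intros t Ht. unfold C_aff.
  change (iterP j (fun s => (s, pi s)) t) with (Yp pi (S j) t).
  rewrite Yp_fst. apply HS. exact Ht.
Qed.
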